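(* Let $(X,d)$ be a metric space, $\mu$ a Borel probability measure on $X$ with no atoms, and $T:X\to X$ a measurable map preserving $\mu$. (i) Suppose that every decreasing sequence of balls $B(y,r_1)\supseteq B(y,r_2)\supseteq\cdots$ in $X$ with a common center $y$ and with $\sum_n\mu(B(y,r_n))=\infty$ satisfies $\mu(\limsup_n T^{-n}B(y,r_n))=1$. Then for every $y\in X$, $$\liminf_{r\to 0}\frac{\log\tau_{B(y,r)}(x)}{-\log\mu(B(y,r))}=1\quad\text{for }\mu\text{-a.e. }x.$$ (ii) Let $B(y,r)=\{x: d(x,y)\le r\}$ denote the closed ball. Suppose that every decreasing sequence of closed balls $A_n=B(y,r_n)$ with a common center $y$ and with $\sum_n\mu(A_n)=\infty$ is strongly Borel–Cantelli. Then for every $y\in X$, $$\lim_{r\to 0}\frac{\log\tau_{B(y,r)}(x)}{-\log\mu(B(y,r))}=1\quad\text{for }\mu\text{-a.e. }x.$$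
   Context: $\tau_A(x)=\min\{n\in\mathbf N: T^n(x)\in A\}$ (with $\tau_A(x)=\infty$ if no such $n$). $\limsup_n S_n$ denotes the set of points belonging to infinitely many $S_n$. A sequence of sets $A_n\subseteq X$ is strongly Borel–Cantelli (SBC) if for $\mu$-a.e. $x$, $\frac{\sum_{n=1}^N 1_{T^{-n}A_n}(x)}{\sum_{n=1}^N\mu(A_n)}\to 1$ as $N\to\infty$, where $1_A$ is the indicator function of $A$. *)

(* Defs.v *)
From HB Require Import structures.
From mathcomp Require Import all_boot all_order all_algebra.
From mathcomp Require Import all_classical all_reals all_analysis.
Set Implicit Arguments. Unset Strict Implicit. Unset Printing Implicit Defensive.
Import Order.TTheory GRing.Theory Num.Theory.
Import numFieldNormedType.Exports.
Local Open Scope classical_set_scope.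
Local Open Scope ring_scope.

Section Defs.
Context {R : realType} {X : Type}.

Definition is_metric (dist : X -> X -> R) : Prop :=
  [/\ (forall x y, 0 <= dist x y),
      (forall x y, dist x y = 0 <-> x = y),
      (forall x y, dist x y = dist y x) &
      (forall x y z, dist x z <= dist x y + dist y z)].

Definition oball (dist : X -> X -> R) (y : X) (r : R) : set X :=
  [set x | dist x y < r].
Definition cball (dist : X -> X -> R) (y : X) (r : R) : set X :=
  [set x | dist x y <= r].

Definition metric_open (dist : X -> X -> R) (A : set X) : Prop :=
  forall x, A x -> exists2 e : R, 0 < e & oball dist x e `<=` A.

(* limsup_n T^{-n} A_n, with A_n := A (n-1) for n >= 1 *)
Definition limsup_preim (T : X -> X) (A : nat -> set X) : set X :=
  [set x | forall m : nat, exists k : nat, (m <= k)%N /\ A k (iter k.+1 T x)].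

(* tau_A(x) = min {n >= 1 : T^n x \in A}, +oo if no such n *)
Definition hitting_time (T : X -> X) (A : set X) (x : X) : \bar R :=
  ereal_inf [set (n%:R)%:E | n in [set n : nat | (0 < n)%N /\ A (iter n T x)]].
End Defs.

Section MeasDefs.
Context {d : measure_display} {R : realType} {X : measurableType d}.

Definition hratio (T : X -> X) (mu : {measure set X -> \bar R}) (A : set X)
    (x : X) : \bar R :=
  match hitting_time T A x with
  | EFin t => (ln t / - ln (fine (mu A)))%:E
  | _ => +oo%E
  end.

(* strongly Borel-Cantelli; A_n := A (n-1) for n >= 1:
   (sum_{n=1}^N 1_{T^{-n} A_n}(x)) / (sum_{n=1}^N mu(A_n)) --> 1 a.e. *)
Definition SBC (T : X -> X) (mu : {measure set X -> \bar R})
    (A : nat -> set X) : Prop :=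
  {ae mu, forall x,
    (fun N : nat =>
       (\sum_(k < N) (asbool (A k (iter k.+1 T x)))%:R) /
       (\sum_(k < N) fine (mu (A k)))) @ \oo --> (1 : R)}.
End MeasDefs.

(* Main.v *)
Require Import Defs.
From HB Require Import structures.
From mathcomp Require Import all_boot all_order all_algebra.
From mathcomp Require Import all_classical all_reals all_analysis.
From mathcomp Require Import ring lra.
Set Implicit Arguments. Unset Strict Implicit. Unset Printing Implicit Defensive.
Import Order.TTheory GRing.Theory Num.Theory.
Import numFieldNormedType.Exports.
Local Open Scope classical_set_scope.
Local Open Scope ring_scope.

Section HT.
Context {R : realType} {X : Type}.

Lemma ht_ge1 (T : X -> X) (A : set X) x : (1%:E <= @hitting_time R X T A x)%E.
Proof.
apply: le_ereal_inf_tmp => _ [n [n0 _] <-].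
by rewrite lee_fin ler1n.
Qed.

Lemma ht_le (T : X -> X) (A : set X) x n : (0 < n)%N -> A (iter n T x) ->
  exists t : R, @hitting_time R X T A x = t%:E /\ 1 <= t <= n%:R.
Proof.
move=> n0 An.
have h1 := ht_ge1 T A x.
have h2 : (@hitting_time R X T A x <= (n%:R)%:E)%E.
  by apply: ereal_inf_lbound; exists n.
move: h1 h2; case: (hitting_time T A x) => [t| |] //= h1 h2.
by exists t; rewrite -!lee_fin h1 h2.
Qed.

Lemma ht_ge (T : X -> X) (A : set X) x (M : nat) :
  (forall n, (0 < n)%N -> (n < M)%N -> ~ A (iter n T x)) ->
  (((M%:R)%:E) <= @hitting_time R X T A x)%E.
Proof.
move=> H; apply: le_ereal_inf_tmp => _ [n [n0 An] <-].
rewrite lee_fin ler_nat; case: (leqP M n) => // nM.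
by exfalso; exact: (H n n0 nM An).
Qed.
End HT.

Section HR.
Context {d : measure_display} {R : realType} {X : measurableType d}.

Lemma hratio_le (T : X -> X) (mu : {measure set X -> \bar R}) A x n (c : R) :
  (0 < n)%N -> A (iter n T x) -> 0 < fine (mu A) < 1 ->
  ln (n%:R) <= c * (- ln (fine (mu A))) -> (hratio T mu A x <= c%:E)%E.
Proof.
move=> n0 An /andP[m0 m1] hc.
have [t [ht /andP[t1 tn]]] := @ht_le R _ T A x n n0 An.
rewrite /hratio ht lee_fin.
have L0 : 0 < - ln (fine (mu A)) by rewrite oppr_gt0 ln_lt0 // m0 m1.
rewrite ler_pdivrMr //; apply: le_trans hc.
rewrite ler_ln ?posrE //; first by lra.
by rewrite ltr0n.
Qed.

Lemma hratio_ge (T : X -> X) (mu : {measure set X -> \bar R}) A x (M : nat) (c : R) :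
  (0 < M)%N -> (forall n, (0 < n)%N -> (n < M)%N -> ~ A (iter n T x)) ->
  0 < fine (mu A) < 1 ->
  c * (- ln (fine (mu A))) <= ln (M%:R) -> (c%:E <= hratio T mu A x)%E.
Proof.
move=> M0 HM /andP[m0 m1] hc.
have hge := @ht_ge R _ T A x M HM.
rewrite /hratio; move: hge; case: (hitting_time T A x) => [t| |] //= ht.
  rewrite lee_fin in ht; rewrite lee_fin.
  have L0 : 0 < - ln (fine (mu A)) by rewrite oppr_gt0 ln_lt0 // m0 m1.
  have Mp : 0 < (M%:R : R) by rewrite ltr0n.
  rewrite ler_pdivlMr //; apply: (le_trans hc).
  by rewrite ler_ln ?posrE //; apply: lt_le_trans ht.
by rewrite leey.
Qed.
End HR.

Section Blocks.
Variable N : nat -> nat.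
Hypothesis N0 : N 0 = 0%N.
Hypothesis Ninc : forall j, (N j < N j.+1)%N.

Fixpoint J (k : nat) : nat :=
  match k with
  | 0 => 0%N
  | k'.+1 => if (N (J k').+1 <= k'.+1)%N then (J k').+1 else J k'
  end.

Lemma N_lt i j : (i < j)%N -> (N i < N j)%N.
Proof.
elim: j => // j IH; rewrite ltnS leq_eqVlt => /orP[/eqP->//|/IH h].
exact: ltn_trans h (Ninc j).
Qed.

Lemma N_le i j : (i <= j)%N -> (N i <= N j)%N.
Proof. by rewrite leq_eqVlt => /orP[/eqP->//|/N_lt/ltnW]. Qed.

Lemma N_ge j : (j <= N j)%N.
Proof. elim: j => // j IH; exact: leq_ltn_trans IH (Ninc j). Qed.

Lemma J_spec k : (N (J k) <= k < N (J k).+1)%N.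
Proof.
elim: k => [|k IH] /=; first by rewrite N0 /= (leq_ltn_trans (leq0n _) (Ninc 0)).
case: ifP => h.
  move/andP: IH => [_ h2].
  have e : N (J k).+1 = k.+1 by apply/eqP; rewrite eqn_leq h h2.
  by rewrite e leqnn /= -e Ninc.
move/andP: IH => [h1 h2]; rewrite (leq_trans h1) //.
by rewrite ltnNge h.
Qed.

Lemma J_eq j k : (N j <= k < N j.+1)%N -> J k = j.
Proof.
move=> /andP[h1 h2]; have /andP[g1 g2] := J_spec k.
case: (ltngtP (J k) j) => // h.
- have := N_le h; move=> h3; have := leq_trans h3 h1; by rewrite leqNgt g2.
- have := N_le h; move=> h3; have := leq_trans h3 g1; by rewrite leqNgt h2.
Qed.

Lemma J_ge j k : (N j <= k)%N -> (j <= J k)%N.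
Proof.
move=> h; have /andP[_ g2] := J_spec k.
case: (leqP j (J k)) => // h'.
have := N_le h'; move=> h3; have := leq_trans h3 h.
by rewrite leqNgt g2.
Qed.

Lemma J_mono k k' : (k <= k')%N -> (J k <= J k')%N.
Proof.
move=> h; apply: J_ge; have /andP[g1 _] := J_spec k; exact: leq_trans g1 h.
Qed.

Lemma sum_block {R : realType} (c : nat -> R) j :
  \sum_(0 <= k < N j.+1) c (J k) =
  \sum_(0 <= k < N j) c (J k) + (N j.+1 - N j)%:R * c j.
Proof.
rewrite (@big_cat_nat _ _ _ (N j)) //=; last exact: ltnW.
congr (_ + _).
rewrite (eq_big_nat _ _ (F2 := fun=> c j)); last first.
  by move=> k hk; rewrite (J_eq hk).
by rewrite sumr_const_nat mulr_natl.
Qed.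

End Blocks.

Section Iter.
Context {d : measure_display} {R : realType} {X : measurableType d}.

Lemma iter_meas (T : X -> X) : measurable_fun setT T ->
  forall n, measurable_fun setT (iter n T).
Proof.
move=> mT; elim=> [|n IH]; first exact: measurable_id.
have -> : iter n.+1 T = T \o iter n T by apply: funext => x; rewrite iterS.
exact: measurableT_comp.
Qed.

Lemma preim_meas (T : X -> X) A : measurable_fun setT T -> measurable A ->
  measurable (T @^-1` A).
Proof. by move=> mT mA; rewrite -[_ @^-1` _]setTI; exact: mT. Qed.

Lemma iter_inv (mu : {measure set X -> \bar R}) (T : X -> X) :
  measurable_fun setT T ->
  (forall A, measurable A -> mu (T @^-1` A) = mu A) ->
  forall n A, measurable A -> mu ((iter n T) @^-1` A) = mu A.
Proof.
move=> mT inv; elim=> [|n IH] A mA //.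
have -> : iter n.+1 T @^-1` A = iter n T @^-1` (T @^-1` A).
  by apply/seteqP; split => x.
by rewrite IH ?inv //; exact: preim_meas.
Qed.
End Iter.
Section Gen.
Context {R : realType}.

Lemma small_inv (e : R) : 0 < e -> exists n : nat, (n.+1%:R)^-1 < e.
Proof.
move=> e0; exists (Num.trunc e^-1).
have h : e^-1 < (Num.trunc e^-1).+1%:R by rewrite -truncn_le_nat.
move: h; set t := Num.trunc _ => h.
rewrite -[X in _ < X](invrK e) ltf_pV2 ?posrE ?ltr0n ?invr_gt0 //.
Qed.

Lemma cvge_le (u : nat -> \bar R) l c : u @ \oo --> l ->
  (forall n, (u n <= c)%E) -> (l <= c)%E.
Proof.
move=> H hu; rewrite -(cvg_lim _ H) //; apply: lime_le; first by apply/cvg_ex; exists l.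
by near=> n; apply: hu.
Unshelve. all: by end_near.
Qed.

Lemma cvge_ge (u : nat -> \bar R) l c : u @ \oo --> l ->
  (forall n, (c <= u n)%E) -> (c <= l)%E.
Proof.
move=> H hu; rewrite -(cvg_lim _ H) //; apply: lime_ge; first by apply/cvg_ex; exists l.
by near=> n; apply: hu.
Unshelve. all: by end_near.
Qed.

Lemma pow2_ge (n : nat) : (n.+1%:R : R) <= 2%:R ^+ n.+1.
Proof. by rewrite -natrX ler_nat; apply: ltnW; apply: ltn_expl. Qed.
End Gen.

Section MuGen.
Context {d : measure_display} {R : realType} {X : measurableType d}.
Variable mu : {measure set X -> \bar R}.

Lemma mu_le A B : measurable A -> measurable B -> A `<=` B -> (mu A <= mu B)%E.
Proof. by move=> mA mB AB; rewrite le_measure ?inE. Qed.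

Lemma BC (E : nat -> set X) : (forall k, measurable (E k)) ->
  (forall k, (mu (E k) <= ((2%:R ^+ k)^-1)%:E)%E) ->
  {ae mu, forall x, exists K, forall k, (K <= k)%N -> ~ E k x}.
Proof.
move=> mE hE.
pose U K := \bigcup_i E (K + i)%N.
have mU K : measurable (U K) by apply: bigcup_measurable => i _; exact: mE.
have muU K : (mu (U K) <= (2%:R * (2%:R ^+ K)^-1)%:E)%E.
  pose G n := \bigcup_(i in `I_n) E (K + i)%N.
  have mG n : measurable (G n) by apply: bigcup_measurable => i _; exact: mE.
  have UG : U K = \bigcup_n G n.
    apply/seteqP; split => x.
      by move=> [i _ Ex]; exists i.+1 => //; exists i => //=.
    by move=> [n _ [i _ Ex]]; exists i.
  have ndG : nondecreasing_seq G.
    move=> n m nm; apply/subsetPset => x [i /= im Ex]; exists i => //=.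
    exact: leq_trans im nm.
  have := @nondecreasing_cvg_mu _ _ _ mu _ mG (bigcup_measurable (fun k _ => mG k)) ndG.
  rewrite -UG => hcvg; apply: (cvge_le hcvg) => n /=.
  have -> : G n = \big[setU/set0]_(i < n) E (K + i)%N by rewrite /G bigcup_mkord.
  apply: (le_trans (@content_subadditive _ _ _ mu (\big[setU/set0]_(i < n) E (K+i)%N) (fun i => E (K+i)%N) n (fun k _ => mE _) _ (@subset_refl _ _))).
  - by apply: bigsetU_measurable => k _; exact: mE.
  apply: (@le_trans _ _ (\sum_(k < n) ((2%:R ^+ (K+k))^-1)%:E)%E).
    by apply: lee_sum => i _; exact: hE.
  rewrite sumEFin lee_fin.
  have -> : \sum_(i < n) (2%:R ^+ (K + i))^-1 = series (geometric ((2%:R ^+ K)^-1) (2%:R^-1 : R)) n.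
    rewrite /series /= -(big_mkord xpredT (fun i => (2%:R ^+ (K + i))^-1)).
    by apply: eq_bigr => i _; rewrite exprD invfM exprVn.
  apply: le_trans (geometric_le_lim _ _ _ _) _ => //.
    by rewrite ger0_norm ?invr_ge0 // invf_lt1 // ltr1n.
  rewrite mulrC ler_pM2r ?invr_gt0 ?exprn_gt0 //.
  have -> : (1 - 2%:R^-1 : R) = 2%:R^-1 by field.
  by rewrite invrK.
exists (\bigcap_K U K); split.
- by apply: bigcap_measurable => //; exists 0%N.
- apply/eqP; rewrite eq_le measure_ge0 andbT.
  have hle K : (mu (\bigcap_K U K) <= (2%:R * (2%:R ^+ K)^-1)%:E)%E.
    apply: le_trans (muU K); apply: mu_le => //.
    + by apply: bigcap_measurable => //; exists 0%N.
    + by move=> x; apply.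
  have fin : mu (\bigcap_K U K) \is a fin_num.
    rewrite ge0_fin_numE ?measure_ge0 //; apply: le_lt_trans (hle 0%N) _.
    by rewrite ltry.
  rewrite -(fineK fin) lee_fin.
  apply/ler_addgt0Pr => e e0; rewrite add0r.
  have e2 : 0 < e / 2%:R by rewrite divr_gt0.
  have [n hn] := small_inv e2.
  have := hle n.+1; rewrite -(fineK fin) lee_fin => h; apply: (le_trans h).
  rewrite -ler_pdivlMl ?ltr0n // mulrC; apply: le_trans (ltW hn).
  by rewrite lef_pV2 ?posrE ?exprn_gt0 ?ltr0n // pow2_ge.
- move=> x /= hx K _; apply: contrapT => hK; apply: hx; exists K => k Kk Ek.
  apply: hK; exists (k - K)%N => //; by rewrite subnKC.
Qed.
End MuGen.

Lemma eq_lee {R : realType} (a b : \bar R) : a = b -> (a <= b)%E.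
Proof. by move->. Qed.

Lemma ge_nat_pinfty {R : realType} (x : \bar R) :
  (forall j : nat, ((j%:R)%:E <= x)%E) -> x = +oo%E.
Proof.
case: x => [r| |] // h.
  have := h (Num.trunc `|r|).+1; rewrite lee_fin => h1.
  have h2 : `|r| < (Num.trunc `|r|).+1%:R by rewrite -truncn_le_nat.
  exfalso; clear h; have := ler_norm r; lra.
by have := h 1%N; rewrite leeNy_eq.
Qed.

Lemma trunc_ub {R : realType} (x : R) : x < (Num.trunc x).+1%:R.
Proof. by rewrite -truncn_le_nat. Qed.

Lemma trunc_lb {R : realType} (x : R) : 0 <= x -> (Num.trunc x).+1%:R <= x + 1.
Proof. by move=> x0; rewrite -addn1 natrD lerD2r truncn_le. Qed.

Lemma powb_ge {R : realType} (b n : nat) : (1 < b)%N -> (n.+1%:R : R) <= b%:R ^+ n.+1.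
Proof. by move=> b1; rewrite -natrX ler_nat; apply: ltnW; apply: ltn_expl. Qed.

Lemma contra_aux {R : realType} (e1 e2 : R) : 1 <= e1 -> 3 * e1 + 1 <= e2 ->
  (1 - 2^-1) * e2 < (1 + 2^-1) * e1 -> False.
Proof. move=> h1 h2 h3; lra. Qed.

Lemma arith2 {R : realType} (a Q Jr L1 L2 : R) : 0 < a -> 1 <= Q -> Q <= Jr ->
  L1 <= (Jr + 2) * (Q + 1) * a -> (Jr + 1) * Q * a <= L2 ->
  L1 <= (Q + 3) / Q * L2.
Proof.
move=> a0 Q1 QJ h1 h2.
have c0 : 0 <= (Q + 3) / Q by apply: divr_ge0; lra.
apply: le_trans (ler_wpM2l c0 h2).
have Q0 : Q != 0 by rewrite lt0r_neq0 //; lra.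
rewrite (_ : (Q + 3) / Q * ((Jr + 1) * Q * a) = (Q + 3) * (Jr + 1) * a); last by field.
apply: le_trans h1 _; nra.
Qed.

Lemma natS2 {R : realType} (n : nat) : (n.+1%:R : R) = n%:R + 1.
Proof. by rewrite -addn1 natrD. Qed.
Lemma natS3 {R : realType} (n : nat) : (n.+2%:R : R) = n%:R + 2.
Proof. by rewrite -addn2 natrD. Qed.

Lemma arith3 {R : realType} (Q Lk Ln Lw : R) : 1 <= Q -> Lk <= Ln + Lw ->
  Q * Ln <= Lw -> Lk <= (Q + 1) / Q * Lw.
Proof.
move=> Q1 h1 h2.
have Q0 : Q != 0 by rewrite lt0r_neq0 //; lra.
have Qp : 0 < Q by lra.
have h3 : Ln <= Lw / Q by rewrite ler_pdivlMr // mulrC.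
rewrite (_ : (Q + 1) / Q * Lw = Lw / Q + Lw); last by field.
lra.
Qed.

Lemma arith4 {R : realType} (N L k wi : R) : k <= N + L -> L <= wi + 1 -> 1 <= wi ->
  0 <= N -> k <= (N + 2) * wi.
Proof. move=> h1 h2 h3 h4; nra. Qed.

Lemma arith5 {R : realType} (a e : R) : 0 < a -> 0 < e -> a^-1 < e / 2 -> 2 / e <= a + 1.
Proof.
move=> a0 e0 h.
have h1 : a * a^-1 < a * (e / 2) by rewrite ltr_pM2l.
rewrite mulfV ?lt0r_neq0 // in h1.
rewrite ler_pdivrMr //; nra.
Qed.

Lemma arith6 {R : realType} (a t e : R) : 1 <= a -> a^-1 < e / 3 ->
  t <= (a + 3) / a -> (a - 1) / (a + 1) <= t -> `|1 - t| <= e.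
Proof.
move=> a1 h h1 h2.
have a0 : 0 < a by lra.
have an : a != 0 by rewrite lt0r_neq0.
have a1n : a + 1 != 0 by rewrite lt0r_neq0 //; lra.
have e1 : (a + 3) / a = 1 + 3 * a^-1 by field.
have e2 : (a - 1) / (a + 1) = 1 - 2 * (a + 1)^-1 by field.
have h3 : (a + 1)^-1 <= a^-1 by rewrite lef_pV2 ?posrE //; lra.
have ai0 : 0 < a^-1 by rewrite invr_gt0.
rewrite e1 in h1; rewrite e2 in h2.
rewrite ler_norml; apply/andP; split; lra.
Qed.
Section Fam.
Context {d : measure_display} {R : realType} {X : measurableType d}.
Variables (mu : probability X R) (T : X -> X) (B : R -> set X).
Hypothesis mT : measurable_fun setT T.
Hypothesis Tinv : forall A, measurable A -> mu (T @^-1` A) = mu A.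
Hypothesis Bmeas : forall r, measurable (B r).
Hypothesis Bmono : forall r s, r <= s -> B r `<=` B s.
Hypothesis Bpos : forall r, 0 < r -> (0 < mu (B r))%E.
Hypothesis Bsmall : forall e, 0 < e -> exists2 r, 0 < r & (mu (B r) < e%:E)%E.
Hypothesis Bbig : forall e, e < 1 -> exists r, (e%:E < mu (B r))%E.

Let m r := fine (mu (B r)).

Lemma muE A : measurable A -> mu A = (fine (mu A))%:E.
Proof.
move=> mA; rewrite fineK // ge0_fin_numE ?measure_ge0 //.
by apply: le_lt_trans (probability_le1 mu mA) _; rewrite ltry.
Qed.

Lemma fine_mu_ge0 A : 0 <= fine (mu A).
Proof. by apply: fine_ge0; exact: measure_ge0. Qed.

Lemma fine_mu_le1 A : measurable A -> fine (mu A) <= 1.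
Proof. by move=> mA; rewrite -lee_fin -muE //; exact: probability_le1. Qed.

Lemma mE r : mu (B r) = (m r)%:E.
Proof. exact: muE. Qed.

Lemma m_mono r s : r <= s -> m r <= m s.
Proof. by move=> rs; rewrite -lee_fin -!mE; apply: mu_le => //; exact: Bmono. Qed.

Lemma m_pos r : 0 < r -> 0 < m r.
Proof. by move=> r0; rewrite -lte_fin -mE; exact: Bpos. Qed.

Lemma m_le1 r : m r <= 1.
Proof. exact: fine_mu_le1. Qed.

Lemma m_small e : 0 < e -> exists2 r, 0 < r & m r < e.
Proof. by move=> e0; have [r r0 h] := Bsmall e0; exists r => //; rewrite -lte_fin -mE. Qed.

Lemma m_big e : e < 1 -> exists r, e < m r.
Proof. by move=> e1; have [r h] := Bbig e1; exists r; rewrite -lte_fin -mE. Qed.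

Lemma Cover th : 0 < th -> th < 1 -> exists D, [/\ measurable D,
  (mu D <= th%:E)%E & forall r, m r <= th -> B r `<=` D].
Proof.
move=> th0 th1.
pose S := [set r | m r <= th].
have [r0 r00 hr0] := m_small th0.
have [r1 hr1] := m_big th1.
have ubS : ubound S r1.
  move=> r Sr; rewrite leNgt; apply/negP => h.
  have := m_mono (ltW h); rewrite /S /= in Sr; lra.
have hs : has_sup S by split; [exists r0; rewrite /S /= ltW|exists r1].
set s := sup S.
have ub := sup_upper_bound hs.
case: (lerP (m s) th) => hs'.
  exists (B s); split => //; first by rewrite mE lee_fin.
  by move=> r hr; apply: Bmono; apply: ub.
pose F n := B (s - (n.+1%:R)^-1).
have mF n : measurable (F n) by exact: Bmeas.
exists (\bigcup_n F n); split.
- by apply: bigcup_measurable.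
- have ndF : nondecreasing_seq F.
    move=> i j ij; apply/subsetPset; apply: Bmono.
    by rewrite lerD2l lerN2 lef_pV2 ?posrE ?ltr0n // ler_nat.
  have h := @nondecreasing_cvg_mu _ _ _ mu F mF (bigcup_measurable (fun k _ => mF k)) ndF.
  apply: (cvge_le h) => n /=.
  have e0 : 0 < (n.+1%:R : R)^-1 by rewrite invr_gt0 ltr0n.
  have [t St ht] := sup_adherent e0 hs.
  apply: (le_trans (mu_le mu (mF n) (Bmeas t) (Bmono (ltW ht)))).
  by move: St; rewrite /S /= -lee_fin -mE.
- move=> r hr.
  have rs : r < s.
    rewrite lt_neqAle ub // andbT; apply/eqP => rs; rewrite -rs in hs'; lra.
  have e0 : 0 < s - r by rewrite subr_gt0.
  have [n hn] := small_inv e0.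
  move=> x Bx; exists n => //; apply: (Bmono _ Bx).
  rewrite lerBrDr -lerBrDl; exact: ltW.
Qed.

Lemma LB q : (1 <= q)%N -> {ae mu, forall x, exists2 dl, 0 < dl & forall r, 0 < r -> r < dl ->
  (((q%:R - 1) / (q%:R + 1))%:E <= hratio T mu (B r) x)%E}.
Proof.
move=> q1.
pose th k : R := (2%:R ^+ (k.+1 * q.+1))^-1.
have th0 k : 0 < th k by rewrite invr_gt0 exprn_gt0.
have th1 k : th k < 1 by rewrite invf_lt1 ?exprn_gt0 // exprn_egt1 // ltr1n.
have thA i j : (i <= j)%N -> th j <= th i.
  move=> ij; rewrite lef_pV2 ?posrE ?exprn_gt0 // ler_eXn2l ?ltr1n //.
  by rewrite leq_mul2r ltnS ij orbT.
have lnth k : ln (th k) = - ((k.+1 * q.+1)%:R * ln 2%:R).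
  by rewrite lnV ?posrE ?exprn_gt0 // lnXn // mulr_natl.
have /choice [D hD] : forall k, exists D, [/\ measurable D,
  (mu D <= (th k)%:E)%E & forall r, m r <= th k -> B r `<=` D].
  by move=> k; apply: Cover.
pose M k := (2 ^ (k.+1 * q))%N.
pose E k := \bigcup_(n in `I_(M k)) (iter n T @^-1` D k).
have mD k : measurable (D k) by case: (hD k).
have mE' k : measurable (E k).
  by apply: bigcup_measurable => n _; apply: preim_meas => //; exact: iter_meas.
have muE' k : (mu (E k) <= ((2%:R ^+ k)^-1)%:E)%E.
  rewrite /E bigcup_mkord.
  apply: (le_trans (@content_subadditive _ _ _ mu _ (fun n => iter n T @^-1` D k) (M k) _ _ (@subset_refl _ _))).
  - by move=> n _; apply: preim_meas => //; exact: iter_meas.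
  - by apply: bigsetU_measurable => n _; apply: preim_meas => //; exact: iter_meas.
  apply: (@le_trans _ _ (\sum_(n < M k) (th k)%:E)%E).
    apply: lee_sum => n _; apply: le_trans (eq_lee (iter_inv mT Tinv n (mD k))) _.
    by case: (hD k).
  rewrite sumEFin lee_fin sumr_const card_ord -[X in X <= _]mulr_natl /M natrX /th.
  rewrite mulnSr exprD invfM mulrA mulfV ?mul1r ?expf_neq0 //.
  by rewrite lef_pV2 ?posrE ?exprn_gt0 // ler_eXn2l ?ltr1n.
apply: filterS (BC mE' muE') => x [K HK].
pose K' := maxn K q.
have [dl dl0 hdl] := m_small (th0 K').
exists dl => // r r0 rdl.
have mr0 := m_pos r0.
have mrK : m r < th K' by apply: le_lt_trans (m_mono (ltW rdl)) hdl.
have exP : exists i, th i < m r.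
  have [n hn] := small_inv mr0; exists n; apply: le_lt_trans hn.
  rewrite lef_pV2 ?posrE ?exprn_gt0 ?ltr0n //; apply: le_trans (pow2_ge n) _.
  by rewrite ler_eXn2l ?ltr1n // leq_pmulr.
case: (ex_minnP exP) => i0 Pi0 mini.
case: i0 Pi0 mini => [|k] Pk mini.
  by have := lt_trans (le_lt_trans (thA _ _ (leq0n K')) Pk) mrK; rewrite ltxx.
have Kk : (K' <= k)%N.
  rewrite leqNgt; apply/negP => kK.
  by have := lt_trans (le_lt_trans (thA _ _ kK) Pk) mrK; rewrite ltxx.
have nPk : m r <= th k.
  rewrite leNgt; apply/negP => h; have := mini _ h; by rewrite ltnn.
have noE : ~ E k x by apply: HK; exact: leq_trans (leq_maxl K q) Kk.
apply: (@hratio_ge _ _ _ _ _ _ _ (M k)).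
- by rewrite expn_gt0.
- move=> n n0 nM Bn; apply: noE; exists n => //.
  by case: (hD k) => _ _ h; apply: (h r nPk).
- by rewrite mr0 /=; apply: le_lt_trans nPk (th1 k).
rewrite /M natrX lnXn // -/(m r).
have l2 : 0 < ln (2%:R : R) by rewrite ln_gt0 // ltr1n.
have hlm : - ln (m r) <= (k.+2 * q.+1)%:R * ln 2%:R.
  rewrite -[leRHS]opprK -(lnth k.+1) lerN2 ler_ln ?posrE //; exact: ltW.
have qk : (q <= k.+2)%N by exact: leq_trans (leq_trans (leq_maxr K q) Kk) (leqW (leqnSn k)).
have c0 : 0 <= (q%:R - 1) / (q%:R + 1) :> R.
  by rewrite divr_ge0 // ?subr_ge0 ?ler1n // addr_ge0.
apply: le_trans (ler_wpM2l c0 hlm) _.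
rewrite [leRHS](_ : _ = (k%:R + 1) * q%:R * ln 2%:R); last first.
  by rewrite -(mulr_natl (ln 2%:R) (k.+1 * q)) natrM -addn1 natrD.
rewrite !natrM.
have -> : ((k.+2)%:R : R) = k%:R + 2 by rewrite -addn2 natrD.
have -> : ((q.+1)%:R : R) = q%:R + 1 by rewrite -addn1 natrD.
have Q1 : (1 : R) <= q%:R by rewrite ler1n.
have hQK : (q%:R : R) <= k%:R + 2 by rewrite -[2]/(2%:R) -natrD ler_nat addn2.
have K0 : (0:R) <= k%:R by [].
move: l2; set a := ln _ => l2.
have Qp : q%:R + 1 != 0 :> R by rewrite lt0r_neq0 // ltr_wpDl.
rewrite (_ : (q%:R - 1) / (q%:R + 1) * ((k%:R + 2) * (q%:R + 1) * a) = (q%:R - 1) * (k%:R + 2) * a); last by field.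
nra.
Qed.

Lemma Inner (Bright : forall r, B r = \bigcap_n B (r + (n.+1%:R)^-1)) th :
  0 < th -> th < 1 -> exists u, [/\ 0 < u, th <= m u & forall r, r < u -> m r < th].
Proof.
move=> th0 th1.
pose S := [set r | m r < th].
have [r0 r00 hr0] := m_small th0.
have [r1 hr1] := m_big th1.
have ubS : ubound S r1.
  move=> r Sr; rewrite leNgt; apply/negP => h.
  have := m_mono (ltW h); rewrite /S /= in Sr; lra.
have Sne : S !=set0 by exists r0.
have hs : has_sup S by split => //; exists r1.
set s := sup S.
have ub := sup_upper_bound hs.
exists s; split.
- exact: lt_le_trans r00 (ub _ hr0).
- pose F n := B (s + (n.+1%:R)^-1).
  have mF n : measurable (F n) by exact: Bmeas.
  have niF : nonincreasing_seq F.
    move=> i j ij; apply/subsetPset; apply: Bmono.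
    by rewrite lerD2l lef_pV2 ?posrE ?ltr0n // ler_nat.
  have F0 : (mu (F 0%N) < +oo)%E by rewrite mE ltry.
  have mI : measurable (\bigcap_n F n) by apply: bigcap_measurable => //; exists 0%N.
  have h := @nonincreasing_cvg_mu _ _ _ mu F F0 mF mI niF.
  rewrite -(Bright s) in h.
  rewrite -lee_fin -mE; apply: (cvge_ge h) => n /=.
  have e0 : 0 < (n.+1%:R : R)^-1 by rewrite invr_gt0 ltr0n.
  have nS : ~ S (s + (n.+1%:R)^-1).
    move=> hS; have := ub _ hS; rewrite gerDl leNgt e0 //.
  rewrite mE lee_fin; rewrite /S /= in nS; rewrite leNgt; apply/negP => h'; exact: nS.
- move=> r rs; have [t St rt] := sup_gt Sne rs.
  exact: le_lt_trans (m_mono (ltW rt)) St.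
Qed.

Lemma UBii (Bright : forall r, B r = \bigcap_n B (r + (n.+1%:R)^-1))
  (Hsbc : forall r : nat -> R, (forall k, 0 < r k) ->
      (forall k, B (r k.+1) `<=` B (r k)) ->
      (\sum_(0 <= k <oo) mu (B (r k)) = +oo)%E ->
      SBC T mu (fun k => B (r k))) q : (1 <= q)%N ->
  {ae mu, forall x, exists2 dl, 0 < dl & forall r, 0 < r -> r < dl ->
    (hratio T mu (B r) x <= ((q%:R + 3) / q%:R)%:E)%E}.
Proof.
move=> q1.
have q0 : q != 0%N by rewrite -lt0n.
pose th j : R := (3%:R ^+ (j.+1 * q))^-1.
have th0 j : 0 < th j by rewrite invr_gt0 exprn_gt0.
have th1 j : th j < 1.
  by rewrite invf_lt1 ?exprn_gt0 // exprn_egt1 ?muln_eq0 ?negb_or ?q0 // ltr1n.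
have thA i j : (i <= j)%N -> th j <= th i.
  move=> ij; rewrite lef_pV2 ?posrE ?exprn_gt0 // ler_eXn2l ?ltr1n //.
  by rewrite leq_mul2r ltnS ij orbT.
have /choice [u hu] : forall j, exists u, [/\ 0 < u, th j <= m u &
    forall r, r < u -> m r < th j].
  by move=> j; apply: Inner.
have u0 j : 0 < u j by case: (hu j).
have uc j : th j <= m (u j) by case: (hu j).
have ult j r : r < u j -> m r < th j by case: (hu j) => _ _; apply.
have uA i j : (i <= j)%N -> u j <= u i.
  move=> ij; rewrite leNgt; apply/negP => h.
  have := ult j _ h; have := uc i; have := thA _ _ ij; lra.
pose c j := m (u j).
have c0 j : 0 < c j by apply: m_pos.
have c1 j : c j <= 1 by apply: m_le1.
pose L (E : R) j : nat := (Num.trunc ((2 * E + 1) / c j)).+1.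
pose st := fix st (j : nat) : nat * R := match j with
  | 0 => (0%N, 0)
  | j'.+1 => ((st j').1 + L (st j').2 j', (st j').2 + (L (st j').2 j')%:R * c j') end.
pose N j := (st j).1.
pose Ev j := (st j).2.
have NS j : N j.+1 = (N j + L (Ev j) j)%N by [].
have EvS j : Ev j.+1 = Ev j + (L (Ev j) j)%:R * c j by [].
have N0 : N 0 = 0%N by [].
have Ninc j : (N j < N j.+1)%N by rewrite NS addnS ltnS leq_addr.
have Ev0 j : 0 <= Ev j.
  elim: j => [|j IH]; first by rewrite /Ev /=.
  by rewrite EvS addr_ge0 // mulr_ge0 // ltW.
have Lc j : 2 * Ev j + 1 <= (L (Ev j) j)%:R * c j.
  rewrite -ler_pdivrMr //; apply: ltW; exact: trunc_ub.
have Lc' j : (L (Ev j) j)%:R * c j <= 2 * Ev j + 2.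
  have h := trunc_lb (divr_ge0 (addr_ge0 (mulr_ge0 (ler0n _ 2) (Ev0 j)) ler01) (ltW (c0 j))).
  have := ler_wpM2r (ltW (c0 j)) h; rewrite (mulrDl ((2 * Ev j + 1) / c j)) divfK ?lt0r_neq0 // mul1r.
  have := c1 j; rewrite /L; lra.
have Ev_ge j : j%:R <= Ev j.
  elim: j => [|j IH]; first by rewrite /Ev /=.
  rewrite EvS -addn1 natrD; have := Lc j; have := Ev0 j; lra.
have Ev_le j : Ev j + 1 <= 3%:R ^+ j.
  elim: j => [|j IH]; first by rewrite /Ev /= add0r expr0.
  rewrite EvS exprS; have := Lc' j; lra.
have L_le j : ((L (Ev j) j)%:R : R) <= 2 * 3%:R ^+ j * 3%:R ^+ (j.+1 * q).
  have Q1 : 1 <= (3%:R : R) ^+ (j.+1 * q) by rewrite exprn_ege1 // ler1n.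
  have cQ : (c j)^-1 <= 3%:R ^+ (j.+1 * q).
    by rewrite -[leRHS]invrK lef_pV2 ?posrE ?invr_gt0 ?exprn_gt0 //; exact: uc.
  have h := trunc_lb (divr_ge0 (addr_ge0 (mulr_ge0 (ler0n _ 2) (Ev0 j)) ler01) (ltW (c0 j))).
  rewrite /L; apply: (le_trans h).
  have h2 : (2 * Ev j + 1) / c j <= (2 * 3%:R ^+ j - 1) * 3%:R ^+ (j.+1 * q).
    apply: ler_pM; first by rewrite addr_ge0 // mulr_ge0 // Ev0.
    - by rewrite invr_ge0 ltW.
    - have := Ev_le j; lra.
    - exact: cQ.
  move: h2 Q1; set P := _ ^+ j; set Q := _ ^+ _; move=> h2 Q1; nra.
have N_le j : (N j)%:R <= (3%:R : R) ^+ (j * q.+1).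
  elim: j => [|j IH]; first by rewrite N0 mul0n expr0 ler01.
  rewrite NS natrD.
  have e1 : (j.+1 * q.+1 = (j + j.+1 * q).+1)%N by rewrite mulnS addSn.
  have e2 : (3%:R : R) ^+ (j * q.+1) <= 3%:R ^+ (j + j.+1 * q).
    by rewrite ler_eXn2l ?ltr1n // mulnS leq_add2l leq_mul2r leqnSn orbT.
  rewrite e1 exprS exprD; move: (L_le j) e2 IH; rewrite exprD.
  set P := _ ^+ j; set Q := _ ^+ (j.+1 * q); set Z := _ ^+ (j * q.+1).
  have P0 : 0 <= P by rewrite exprn_ge0.
  have Q0 : 0 <= Q by rewrite exprn_ge0.
  lra.
pose rho k := u (J N k).
have sumE j : \sum_(0 <= k < N j) c (J N k) = Ev j.
  elim: j => [|j IH]; first by rewrite N0 big_geq.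
  rewrite (sum_block N0 Ninc) IH EvS NS addKn //.
have hS := Hsbc rho (fun k => u0 _)
  (fun k => Bmono (uA _ _ (J_mono N0 Ninc (leqnSn k)))).
have : SBC T mu (fun k => B (rho k)).
  apply: hS; apply: ge_nat_pinfty => j.
  apply: le_trans (nneseries_lim_ge (N j) (fun _ _ _ => measure_ge0 _ _)).
  rewrite (eq_bigr (fun k => (c (J N k))%:E)); last by move=> k _; exact: mE.
  by rewrite sumEFin lee_fin sumE.
move=> {}hS; apply: filterS hS => x hx.
move/cvgrPdist_lt: hx => hx.
have h2 : (0:R) < 2^-1 by rewrite invr_gt0.
have [N1 _ hN1] := hx _ h2.
pose Sx n := \sum_(0 <= k < n) (`[< B (rho k) (iter k.+1 T x) >]%:R : R).
have hN1' n : (N1 <= n)%N -> `|1 - Sx n / \sum_(0 <= k < n) c (J N k)| < 2^-1.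
  by move=> hn; have := hN1 n hn; rewrite /Sx !big_mkord.
have hit j : (maxn N1 1 <= j)%N -> exists k, (N j <= k < N j.+1)%N /\ B (u j) (iter k.+1 T x).
  move=> hj; apply: contrapT => hno.
  have blk : Sx (N j.+1) = Sx (N j).
    rewrite /Sx (@big_cat_nat _ _ _ (N j) 0 (N j.+1)) //=; last exact: ltnW.
    rewrite [X in _ + X = _](_ : _ = 0) ?addr0 //.
    rewrite big_nat_cond big1 // => k /andP[hk _].
    have e : J N k = j := J_eq N0 Ninc hk.
    by rewrite /rho e asboolF // => hB; apply: hno; exists k; split.
  have j1 : (1 <= j)%N := leq_trans (leq_maxr _ _) hj.
  have jN : (N1 <= N j)%N := leq_trans (leq_trans (leq_maxl _ _) hj) (N_ge Ninc j).
  have jN' : (N1 <= N j.+1)%N := leq_trans jN (ltnW (Ninc j)).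
  have h1 := hN1' _ jN; have h3 := hN1' _ jN'.
  rewrite sumE in h1; rewrite sumE blk in h3.
  move: h1 h3; set s := Sx (N j) => h1 h3.
  have E1 : 1 <= Ev j by apply: le_trans (Ev_ge j); rewrite ler1n.
  have E2 : 3 * Ev j + 1 <= Ev j.+1 by rewrite EvS; have := Lc j; lra.
  have E1p : 0 < Ev j by lra.
  have E2p : 0 < Ev j.+1 by lra.
  move: h1 h3; rewrite !ltr_norml => /andP[a1 a2] /andP[b1 b2].
  have hs1 : s / Ev j < 1 + 2^-1 by lra.
  have hs2 : 1 - 2^-1 < s / Ev j.+1 by lra.
  rewrite ltr_pdivrMr // in hs1; rewrite ltr_pdivlMr // in hs2.
  have : (1 - 2^-1) * Ev j.+1 < (1 + 2^-1) * Ev j := lt_trans hs2 hs1.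
  exact: contra_aux E1 E2.
pose J0 := maxn (maxn N1 1) q.
exists (u J0) => // r r0 rdl.
have mr0 := m_pos r0.
have exI : exists i, u i <= r.
  have [n hn] := small_inv mr0; exists n.
  rewrite leNgt; apply/negP => h; have h' := ult n r h.
  have : th n <= (n.+1%:R)^-1.
    rewrite lef_pV2 ?posrE ?exprn_gt0 ?ltr0n //.
    apply: le_trans (@powb_ge R 3 n isT) _.
    by rewrite ler_eXn2l ?ltr1n // leq_pmulr.
  move=> h''; have := lt_trans (le_lt_trans h'' hn) h'; by rewrite ltxx.
case: (ex_minnP exI) => i0 hi0 mini.
case: i0 hi0 mini => [|j] hj mini.
  have := le_lt_trans (le_trans (uA 0%N J0 (leq0n _)) hj) rdl; by rewrite ltxx.
have J0j : (J0 <= j)%N.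
  rewrite leqNgt; apply/negP => h.
  have := le_lt_trans (le_trans (uA _ _ h) hj) rdl; by rewrite ltxx.
have ruj : r < u j.
  rewrite ltNge; apply/negP => h; have := mini _ h; by rewrite ltnn.
have [k [hk hB]] := hit j.+1 (leq_trans (leq_maxl _ _) (leq_trans J0j (leqnSn j))).
apply: (@hratio_le _ _ _ _ _ _ _ k.+1) => //.
- exact: Bmono hj _ hB.
- by rewrite mr0 /=; apply: lt_trans (ult j r ruj) (th1 j).
have l3 : 0 < ln (3%:R : R) by rewrite ln_gt0 // ltr1n.
have hk1 : (k.+1%:R : R) <= 3%:R ^+ (j.+2 * q.+1).
  apply: le_trans (N_le j.+2); rewrite ler_nat; by case/andP: hk.
have A1 : ln (k.+1%:R : R) <= (j.+2 * q.+1)%:R * ln 3%:R.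
  by rewrite mulr_natl -lnXn // ler_ln ?posrE ?ltr0n ?exprn_gt0.
have A2 : (j.+1 * q)%:R * ln 3%:R <= - ln (m r).
  have e : ln (th j) = - ((j.+1 * q)%:R * ln 3%:R).
    by rewrite lnV ?posrE ?exprn_gt0 // lnXn // mulr_natl.
  rewrite -[leLHS]opprK -e lerN2 ler_ln ?posrE //; exact: ltW (ult j r ruj).
rewrite !natrM (@natS3 R j) (@natS2 R q) in A1; rewrite natrM (@natS2 R j) in A2.
apply: (arith2 l3 _ _ A1 A2); first by rewrite ler1n.
have : (q <= j)%N := leq_trans (leq_maxr _ _) J0j.
by rewrite -(ler_nat R).
Qed.

Lemma UBi (Hls : forall r : nat -> R, (forall k, 0 < r k) ->
      (forall k, B (r k.+1) `<=` B (r k)) ->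
      (\sum_(0 <= k <oo) mu (B (r k)) = +oo)%E ->
      mu (limsup_preim T (fun k => B (r k))) = 1%E) q : (1 <= q)%N ->
  {ae mu, forall x, forall dl, 0 < dl -> exists2 r, 0 < r /\ r < dl &
    (hratio T mu (B r) x <= ((q%:R + 1) / q%:R)%:E)%E}.
Proof.
move=> q1.
have pick : forall bt : R * R, exists s, 0 < bt.1 -> 0 < bt.2 ->
    [/\ 0 < s, s <= bt.1 & m s <= bt.2].
  move=> [b t] /=; case: (pselect (0 < t)) => ht; last by exists 0 => _ /ht.
  have [r r0 hr] := m_small ht; exists (Num.min r b) => b0 _; split.
  - by rewrite lt_min r0 b0.
  - by rewrite ge_min lexx orbT.
  - by apply: le_trans (m_mono _) (ltW hr); rewrite ge_min lexx.
have [pk hpk] := choice pick.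
pose L s : nat := (Num.trunc ((m s)^-1)).+1.
pose st := fix st (j : nat) : nat * R := match j with
  | 0 => (0%N, pk (1, (2%:R ^+ q)^-1))
  | j'.+1 => (((st j').1 + L (st j').2)%N,
      pk (Num.min (st j').2 (j'.+2%:R^-1), ((((st j').1 + L (st j').2)%N + 2)%:R ^+ q)^-1))
  end.
pose N j := (st j).1.
pose s j := (st j).2.
have NS j : N j.+1 = (N j + L (s j))%N by [].
have N0 : N 0 = 0%N by [].
have Ninc j : (N j < N j.+1)%N by rewrite NS addnS ltnS leq_addr.
have tpos (n : nat) : 0 < (((n + 2)%:R : R) ^+ q)^-1 by rewrite invr_gt0 exprn_gt0 // ltr0n addn2.
have spec j : [/\ 0 < s j, s j <= (j.+1%:R)^-1 & m (s j) <= (((N j + 2)%:R : R) ^+ q)^-1].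
  elim: j => [|j [IH1 IH2 IH3]].
    have := hpk (1, (2%:R ^+ q)^-1) ltr01; rewrite /= invr_gt0 exprn_gt0 // => /(_ isT).
    by case=> h1 h2 h3; split => //; rewrite invr1.
  have hb : 0 < Num.min (s j) (j.+2%:R^-1) by rewrite lt_min IH1 invr_gt0 ltr0n.
  have := hpk (Num.min (s j) (j.+2%:R^-1), ((((N j + L (s j))%N + 2)%:R : R) ^+ q)^-1) hb (tpos _).
  case=> h1 h2 h3; split => //.
  by apply: le_trans h2 _; rewrite ge_min lexx orbT.
have smono j : s j.+1 <= s j.
  have [IH1 _ _] := spec j.
  have hb : 0 < Num.min (s j) (j.+2%:R^-1) by rewrite lt_min IH1 invr_gt0 ltr0n.
  have := hpk (Num.min (s j) (j.+2%:R^-1), ((((N j + L (s j))%N + 2)%:R : R) ^+ q)^-1) hb (tpos _).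
  by case=> h1 h2 h3; apply: le_trans h2 _; rewrite ge_min lexx.
have sA i j : (i <= j)%N -> s j <= s i.
  move=> /subnK <-; elim: (j - i)%N => [|n IH]; first by rewrite add0n.
  by rewrite addSn; exact: le_trans (smono _) IH.
pose c j := m (s j).
have c0 j : 0 < c j by apply: m_pos; case: (spec j).
have Lc j : 1 <= (L (s j))%:R * c j.
  rewrite -ler_pdivrMr // div1r; apply: ltW; exact: trunc_ub.
have sumG j : j%:R <= \sum_(0 <= k < N j) c (J N k).
  elim: j => [|j IH]; first by rewrite N0 big_geq.
  rewrite (sum_block N0 Ninc) NS addKn natS2; have := Lc j; lra.
pose rho k := s (J N k).
have hL := Hls rho (fun k => (let: And3 h _ _ := spec (J N k) in h))
  (fun k => Bmono (sA _ _ (J_mono N0 Ninc (leqnSn k)))).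
have : mu (limsup_preim T (fun k => B (rho k))) = 1%E.
  apply: hL; apply: ge_nat_pinfty => j.
  apply: le_trans (nneseries_lim_ge (N j) (fun _ _ _ => measure_ge0 _ _)).
  rewrite (eq_bigr (fun k => (c (J N k))%:E)); last by move=> k _; exact: mE.
  by rewrite sumEFin lee_fin.
move=> {}hL.
set LS := limsup_preim _ _ in hL.
have eqLS : LS = \bigcap_m0 \bigcup_(k in [set k | (m0 <= k)%N]) ((iter k.+1 T) @^-1` B (rho k)).
  apply/seteqP; split => x.
    by move=> hx m0 _; have [k [hk hB]] := hx m0; exists k.
  by move=> hx m0; have [k hk hB] := hx m0 I; exists k.
have mLS : measurable LS.
  rewrite eqLS; apply: bigcap_measurable; first by exists 0%N.
  move=> m0 _; apply: bigcup_measurable => k _; apply: preim_meas => //; exact: iter_meas.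
have hae : {ae mu, forall x, LS x}.
  exists (~` LS); split; first exact: measurableC.
    by rewrite probability_setC // hL subee.
  by move=> x.
apply: filterS hae => x hx dl dl0.
have [j0 hj0] := small_inv dl0.
have [k [hk hB]] := hx (N j0).
set j := J N k.
have jj0 : (j0 <= j)%N := J_ge N0 Ninc hk.
have [sj0 sj1 sj2] := spec j.
exists (s j).
  split => //; apply: le_lt_trans sj1 _; apply: le_lt_trans _ hj0.
  by rewrite lef_pV2 ?posrE ?ltr0n // ler_nat.
have w0 : 0 < m (s j) := c0 j.
have Np : 1 < ((N j + 2)%:R : R) ^+ q.
  by rewrite exprn_egt1 -?lt0n // ltr1n addn2.
have w1 : m (s j) < 1.
  by apply: le_lt_trans sj2 _; rewrite invf_lt1 // (lt_trans _ Np).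
apply: (@hratio_le _ _ _ _ _ _ _ k.+1) => //.
  by rewrite w0 w1.
set w := m (s j).
have Q1 : (1 : R) <= q%:R by rewrite ler1n.
apply: (arith3 Q1 (Ln := ln ((N j + 2)%:R))).
- rewrite -lnV ?posrE // -lnM ?posrE ?ltr0n ?addn2 ?invr_gt0 //.
  rewrite ler_ln ?posrE ?ltr0n ?mulr_gt0 ?invr_gt0 ?addn2 //.
  have hkN : (k.+1 <= N j.+1)%N by have /andP[_ h] := J_spec N0 Ninc k.
  have wi1 : 1 <= w^-1 by rewrite invf_ge1 // ltW.
  rewrite (@natS3 R (N j)).
  apply: (arith4 (L := (L (s j))%:R)).
  + by rewrite -natrD ler_nat -NS.
  + by apply: trunc_lb; rewrite invr_ge0 ltW.
  + exact: wi1.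
  + exact: ler0n.
- rewrite mulr_natl -lnXn ?ltr0n ?addn2 // -lnV ?posrE //.
  rewrite ler_ln ?posrE ?exprn_gt0 ?invr_gt0 ?ltr0n ?addn2 //.
  rewrite -[leLHS]invrK lef_pV2 ?posrE ?invr_gt0 ?exprn_gt0 ?ltr0n //.
  by move: sj2; rewrite addn2.
Qed.
End Fam.
Section Metric.
Context {d : measure_display} {R : realType} {X : measurableType d}.
Variable dist : X -> X -> R.
Hypothesis Hmet : is_metric dist.
Hypothesis Hsig : @measurable d X = <<s [set A | metric_open dist A] >>.

Lemma open_meas A : metric_open dist A -> measurable A.
Proof. by move=> hA; rewrite Hsig; exact: sub_sigma_algebra. Qed.

Lemma oball_meas y r : measurable (oball dist y r).
Proof.
case: Hmet => d0 dxx dsym dtri.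
apply: open_meas => x hx; exists (r - dist x y); first by rewrite subr_gt0.
move=> z hz; rewrite /oball /= in hx hz *.
have := dtri z x y; lra.
Qed.

Lemma cball_meas y r : measurable (cball dist y r).
Proof.
case: Hmet => d0 dxx dsym dtri.
have h : metric_open dist (~` cball dist y r).
  move=> x hx0; have hx : r < dist x y by rewrite ltNge; apply/negP.
  exists (dist x y - r); first by rewrite subr_gt0.
  move=> z hz; rewrite /oball /cball /= in hz *; move=> hz2.
  have := dtri x z y; rewrite (dsym x z); lra.
by rewrite -[cball _ _ _]setCK; apply: measurableC; exact: open_meas.
Qed.
End Metric.

Section Gens.
Context {d : measure_display} {R : realType} {X : measurableType d}.
Variable mu : probability X R.

Lemma small_gen (y : X) (F : nat -> set X) : (forall n, measurable (F n)) ->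
  nonincreasing_seq F -> \bigcap_n F n = [set y] -> mu [set y] = 0%E ->
  forall e : R, 0 < e -> exists n, (mu (F n) < e%:E)%E.
Proof.
move=> mF niF hI h0 e e0; apply: contrapT => hn.
have hge n : (e%:E <= mu (F n))%E.
  by rewrite leNgt; apply/negP => h; apply: hn; exists n.
have F0 : (mu (F 0%N) < +oo)%E.
  by apply: le_lt_trans (probability_le1 mu (mF 0%N)) _; rewrite ltry.
have mI : measurable (\bigcap_n F n) by apply: bigcap_measurable => //; exists 0%N.
have hc := @nonincreasing_cvg_mu _ _ _ mu F F0 mF mI niF.
rewrite hI in hc; have := le_trans (cvge_ge hc hge) (eq_lee h0); rewrite lee_fin; lra.
Qed.

Lemma big_gen (F : nat -> set X) : (forall n, measurable (F n)) ->
  nondecreasing_seq F -> \bigcup_n F n = setT ->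
  forall e : R, e < 1 -> exists n, (e%:E < mu (F n))%E.
Proof.
move=> mF ndF hU e e1; apply: contrapT => hn.
have hle n : (mu (F n) <= e%:E)%E.
  by rewrite leNgt; apply/negP => h; apply: hn; exists n.
have mU : measurable (\bigcup_n F n) by apply: bigcup_measurable.
have hc := @nondecreasing_cvg_mu _ _ _ mu F mF mU ndF.
rewrite hU in hc; have := le_trans (eq_lee (esym (probability_setT mu))) (cvge_le hc hle).
rewrite lee_fin; lra.
Qed.
End Gens.

Lemma right0P {R : realType} (V : set R) : (0:R)^'+ V ->
  exists2 e : R, 0 < e & forall r, 0 < r -> r < e -> V r.
Proof.
move/nbhs_ballP => [e e0 he]; exists e => // r r0 re; apply: he => //.
rewrite /ball /= sub0r normrN ger0_norm //; exact: ltW.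
Qed.

Lemma right0N {R : realType} (P : R -> Prop) :
  (exists2 e : R, 0 < e & forall r, 0 < r -> r < e -> P r) ->
  \forall r \near (0:R)^'+, P r.
Proof.
move=> [e e0 he]; near=> r; apply: he.
  by near: r; exact: nbhs_right_gt.
by near: r; exact: nbhs_right_lt.
Unshelve. all: by end_near.
Qed.

Unset Implicit Arguments.

Theorem theorem2p4 (d : measure_display) (R : realType) (X : measurableType d)
  (dist : X -> X -> R) (mu : probability X R) (T : X -> X) :
  is_metric dist ->
  (* mu is a Borel measure: the sigma-algebra is generated by the open sets *)
  @measurable d X = <<s [set A | metric_open dist A] >> ->
  (* no atoms *)
  (forall x : X, mu [set x] = 0%E) ->
  measurable_fun setT T ->
  (forall A, measurable A -> mu (T @^-1` A) = mu A) ->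
  (* (i) open balls *)
  ((forall (y : X) (r : nat -> R), (forall k, 0 < r k) ->
      (forall k, oball dist y (r k.+1) `<=` oball dist y (r k)) ->
      (\sum_(0 <= k <oo) mu (oball dist y (r k)) = +oo)%E ->
      mu (limsup_preim T (fun k => oball dist y (r k))) = 1%E) ->
   forall y : X, (forall r, 0 < r -> (0 < mu (oball dist y r))%E) ->
   {ae mu, forall x,
      limf_einf (fun r => hratio T mu (oball dist y r) x) (0^'+) = 1%E})
  /\
  (* (ii) closed balls *)
  ((forall (y : X) (r : nat -> R), (forall k, 0 < r k) ->
      (forall k, cball dist y (r k.+1) `<=` cball dist y (r k)) ->
      (\sum_(0 <= k <oo) mu (cball dist y (r k)) = +oo)%E ->
      SBC T mu (fun k => cball dist y (r k))) ->
   forall y : X, (forall r, 0 < r -> (0 < mu (cball dist y r))%E) ->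
   {ae mu, forall x,
      hratio T mu (cball dist y r) x @[r --> 0^'+] --> 1%E}).
Proof.
move=> Hmet Hsig Hatom mT Tinv.
have [d0 dxx dsym dtri] := Hmet.
have dyy : forall y, dist y y = 0 by move=> y; apply/dxx.
have arch : forall z : R, exists n : nat, z < n%:R.
  by move=> z; exists (Num.trunc `|z|).+1; apply: le_lt_trans (ler_norm z) (trunc_ub _).
split.
- move=> Hls y Hpos.
  pose B := oball dist y.
  have Bmeas r : measurable (B r) by exact: oball_meas.
  have Bmono r s : r <= s -> B r `<=` B s by move=> rs x hx; exact: lt_le_trans hx rs.
  have Bsmall : forall e, 0 < e -> exists2 r, 0 < r & (mu (B r) < e%:E)%E.
    move=> e e0.
    have niF : nonincreasing_seq (fun n => B (n.+1%:R^-1)).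
      move=> i j ij; apply/subsetPset; apply: Bmono.
      by rewrite lef_pV2 ?posrE ?ltr0n // ler_nat.
    have hI : \bigcap_n B (n.+1%:R^-1) = [set y].
      apply/seteqP; split => x; last first.
        by move=> -> n _; rewrite /B /oball /= dyy invr_gt0 ltr0n.
      move=> hx; apply/dxx; apply/eqP; rewrite eq_le d0 andbT.
      apply/ler_addgt0Pr => e1 e10; rewrite add0r.
      have [n hn] := small_inv e10; exact: ltW (lt_trans (hx n I) hn).
    have [n hn] := @small_gen _ _ _ mu y (fun n => B (n.+1%:R^-1)) (fun n => Bmeas _)
      niF hI (Hatom y) e e0.
    by exists (n.+1%:R^-1) => //; rewrite invr_gt0 ltr0n.
  have Bbig : forall e, e < 1 -> exists r, (e%:E < mu (B r))%E.
    move=> e e1.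
    have ndF : nondecreasing_seq (fun n => B n%:R).
      by move=> i j ij; apply/subsetPset; apply: Bmono; rewrite ler_nat.
    have hU : \bigcup_n B n%:R = setT.
      apply/seteqP; split => x // _; have [n hn] := arch (dist x y); by exists n.
    have [n hn] := @big_gen _ _ _ mu (fun n => B n%:R) (fun n => Bmeas _) ndF hU e e1.
    by exists n%:R.
  have HL q := LB mT Tinv Bmeas Bmono Hpos Bsmall Bbig (q := q.+1) isT.
  have HU q := UBi mT Bmeas Bmono Hpos Bsmall (Hls y) (q := q.+1) isT.
  apply: (filterS _ (ae_foralln (fun q => filterI (HL q) (HU q)))) => x hx.
  rewrite limf_einfE; apply/eqP; rewrite eq_le; apply/andP; split.
  + apply: ge_ereal_sup => _ [V hV <-].
    have [dl dl0 hdl] := right0P hV.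
    apply/lee_addgt0Pr => e e0.
    have [n hn] := small_inv e0.
    have [_ hu] := hx n.
    have [r [r0 rdl] hr] := hu dl dl0.
    apply: le_trans (ereal_inf_lbound _) _; first by exists r => //; exact: hdl.
    apply: le_trans hr _; rewrite -EFinD lee_fin.
    rewrite (_ : (n.+1%:R + 1) / n.+1%:R = 1 + n.+1%:R^-1 :> R); last first.
      by rewrite mulrDl divff ?lt0r_neq0 ?ltr0n // mul1r.
    by rewrite lerD2l ltW.
  + apply/lee_subgt0Pr => e e0.
    have e20 : 0 < e / 2 by rewrite divr_gt0.
    have [n hn] := small_inv e20.
    have [hl _] := hx n.
    have [dl dl0 hdl] := hl.
    apply: le_ereal_sup_tmp.
    exists (ereal_inf [set hratio T mu (B r) x | r in [set r | 0 < r /\ r < dl]]).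
      exists [set r | 0 < r /\ r < dl] => //.
      by apply: right0N; exists dl => // r r0 rdl.
    apply: le_ereal_inf_tmp => _ [r [r0 rdl] <-].
    have h := hdl r r0 rdl; apply: (le_trans _ h); rewrite -EFinB lee_fin.
    rewrite (_ : (n.+1%:R - 1) / (n.+1%:R + 1) = 1 - 2 / (n.+2%:R) :> R); last first.
      rewrite (@natS2 R n.+1) (@natS2 R n); field.
      by rewrite lt0r_neq0 // ltr_wpDl.
    rewrite lerD2l lerN2 ler_pdivrMr ?ltr0n // mulrC -ler_pdivrMr ?ltr0n //.
    apply: le_trans (arith5 (ltr0Sn _ n) e0 hn) _.
    by rewrite -(@natS2 R n.+1).
- move=> Hsbc y Hpos.
  pose B := cball dist y.
  have Bmeas r : measurable (B r) by exact: cball_meas.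
  have Bmono r s : r <= s -> B r `<=` B s by move=> rs x hx; exact: le_trans hx rs.
  have Bsmall : forall e, 0 < e -> exists2 r, 0 < r & (mu (B r) < e%:E)%E.
    move=> e e0.
    have niF : nonincreasing_seq (fun n => B (n.+1%:R^-1)).
      move=> i j ij; apply/subsetPset; apply: Bmono.
      by rewrite lef_pV2 ?posrE ?ltr0n // ler_nat.
    have hI : \bigcap_n B (n.+1%:R^-1) = [set y].
      apply/seteqP; split => x; last first.
        by move=> -> n _; rewrite /B /cball /= dyy invr_ge0 ler0n.
      move=> hx; apply/dxx; apply/eqP; rewrite eq_le d0 andbT.
      apply/ler_addgt0Pr => e1 e10; rewrite add0r.
      have [n hn] := small_inv e10; exact: ltW (le_lt_trans (hx n I) hn).
    have [n hn] := @small_gen _ _ _ mu y (fun n => B (n.+1%:R^-1)) (fun n => Bmeas _)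
      niF hI (Hatom y) e e0.
    by exists (n.+1%:R^-1) => //; rewrite invr_gt0 ltr0n.
  have Bbig : forall e, e < 1 -> exists r, (e%:E < mu (B r))%E.
    move=> e e1.
    have ndF : nondecreasing_seq (fun n => B n%:R).
      by move=> i j ij; apply/subsetPset; apply: Bmono; rewrite ler_nat.
    have hU : \bigcup_n B n%:R = setT.
      apply/seteqP; split => x // _; have [n hn] := arch (dist x y); by exists n => //; exact: ltW.
    have [n hn] := @big_gen _ _ _ mu (fun n => B n%:R) (fun n => Bmeas _) ndF hU e e1.
    by exists n%:R.
  have Bright : forall r, B r = \bigcap_n B (r + (n.+1%:R)^-1).
    move=> r; apply/seteqP; split => x.
      move=> hx n _; rewrite /B /cball /= in hx *; apply: le_trans hx _.
      by rewrite lerDl invr_ge0.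
    move=> hx; rewrite /B /cball /=; rewrite leNgt; apply/negP => h.
    have e0 : 0 < dist x y - r by rewrite subr_gt0.
    have [n hn] := small_inv e0.
    have := hx n I; rewrite /B /cball /=; move: hn; set t := (n.+1%:R)^-1 => hn; lra.
  have HL q := LB mT Tinv Bmeas Bmono Hpos Bsmall Bbig (q := q.+1) isT.
  have HU q := UBii Bmeas Bmono Hpos Bsmall Bbig Bright (Hsbc y) (q := q.+1) isT.
  apply: (filterS _ (ae_foralln (fun q => filterI (HL q) (HU q)))) => x hx.
  apply/fine_cvgP; split.
    have [hl hu] := hx 0%N.
    have [dl1 dl10 h1] := hl; have [dl2 dl20 h2] := hu.
    apply: right0N; exists (Num.min dl1 dl2); first by rewrite lt_min dl10 dl20.
    move=> r r0; rewrite lt_min => /andP[r1 r2].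
    have := h1 r r0 r1; have := h2 r r0 r2.
    by case: (hratio T mu (B r) x).
  apply/cvgrPdist_le => e e0.
  have e30 : 0 < e / 3 by rewrite divr_gt0.
  have [n hn] := small_inv e30.
  have [hl hu] := hx n.
  have [dl1 dl10 h1] := hl; have [dl2 dl20 h2] := hu.
  apply: right0N; exists (Num.min dl1 dl2); first by rewrite lt_min dl10 dl20.
  move=> r r0; rewrite lt_min => /andP[r1 r2].
  have := h1 r r0 r1; have := h2 r r0 r2.
  change ((hratio T mu (B r) x <= ((n.+1%:R + 3) / n.+1%:R)%:E)%E ->
    (((n.+1%:R - 1) / (n.+1%:R + 1))%:E <= hratio T mu (B r) x)%E ->
    `|1 - fine (hratio T mu (B r) x)| <= e).
  case: (hratio T mu (B r) x) => // t; rewrite !lee_fin /= => ht2 ht1.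
  by apply: arith6 ht2 ht1 => //; rewrite ler1n.
Qed.
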